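(* Let H1 $=i(x,i(y,x))$, H2 $=i(i(x,i(y,z)),i(i(x,y),i(x,z)))$, H3 $=i(i(x,n(x)),n(x))$, H4 $=i(x,i(n(x),y))$. Suppose $A$ is provable from H1–H4 using condensed detachment as the only rule of inference. Then $A$ has a proof from H1–H4 using condensed detachment in which no doubly negated formulas occur except those that occur as subformulas of $A$.
   Context: Formulas are terms built from propositional variables using the binary connective $i$ (implication) and the unary connective $n$ (negation). Condensed detachment: from a major premiss $i(A,B)$ and a minor premiss $C$, after renaming variables so that the two premisses share no variables, if $A$ and $C$ are unifiable with most general unifier $\sigma$, infer $B\sigma$. Alphabetic variants of axioms count as axioms, and conclusions may be renamed. A doubly negated formula is one of the form $n(n(t))$. *)

(* Defs.v *)
From Stdlib Require Import List.
Import ListNotations.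

Inductive form : Type :=
| Var : nat -> form
| Imp : form -> form -> form
| Neg : form -> form.

Fixpoint subst (s : nat -> form) (f : form) : form :=
  match f with
  | Var x => s x
  | Imp a b => Imp (subst s a) (subst s b)
  | Neg a => Neg (subst s a)
  end.

Fixpoint occurs (x : nat) (f : form) : Prop :=
  match f with
  | Var y => x = y
  | Imp a b => occurs x a \/ occurs x b
  | Neg a => occurs x a
  end.

Definition renaming (p : nat -> nat) : Prop :=
  exists q : nat -> nat, forall x, q (p x) = x /\ p (q x) = x.

Definition rename (p : nat -> nat) (f : form) : form :=
  subst (fun x => Var (p x)) f.

Definition variant (F G : form) : Prop :=
  exists p, renaming p /\ G = rename p F.

Definition unifier (s : nat -> form) (a b : form) : Prop :=
  subst s a = subst s b.

Definition mgu (s : nat -> form) (a b : form) : Prop :=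
  unifier s a b /\
  forall t, unifier t a b -> exists r, forall x, t x = subst r (s x).

Definition cd (P Q R : form) : Prop :=
  exists P' Q' A B s,
    variant P P' /\ variant Q Q' /\
    (forall x, occurs x P' -> ~ occurs x Q') /\
    P' = Imp A B /\ mgu s A Q' /\ variant (subst s B) R.

Definition x_ := Var 0.
Definition y_ := Var 1.
Definition z_ := Var 2.

Definition H1 : form := Imp x_ (Imp y_ x_).
Definition H2 : form :=
  Imp (Imp x_ (Imp y_ z_)) (Imp (Imp x_ y_) (Imp x_ z_)).
Definition H3 : form := Imp (Imp x_ (Neg x_)) (Neg x_).
Definition H4 : form := Imp x_ (Imp (Neg x_) y_).

Definition is_axiom (F : form) : Prop :=
  exists H, In H [H1; H2; H3; H4] /\ variant H F.

Inductive derivation : list form -> Prop :=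
| deriv_nil : derivation []
| deriv_ax : forall l F, derivation l -> is_axiom F -> derivation (l ++ [F])
| deriv_cd : forall l P Q F, derivation l -> In P l -> In Q l -> cd P Q F ->
    derivation (l ++ [F]).

Definition provable (A : form) : Prop := exists l, derivation (l ++ [A]).

Inductive subform : form -> form -> Prop :=
| sub_refl : forall f, subform f f
| sub_impl : forall f a b, subform f a -> subform f (Imp a b)
| sub_impr : forall f a b, subform f b -> subform f (Imp a b)
| sub_neg : forall f a, subform f a -> subform f (Neg a).

(* Main.v *)
Require Import Defs.
From Stdlib Require Import List.
Import ListNotations.
From Stdlib Require Import Arith Lia Bool.

Lemma subst_subst s t f : subst s (subst t f) = subst (fun x => subst s (t x)) f.
Proof. induction f; simpl; congruence. Qed.

Lemma subst_ext_occ f g F : (forall x, occurs x F -> f x = g x) -> subst f F = subst g F.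
Proof. induction F; simpl; intros H; [apply H; reflexivity | rewrite IHF1, IHF2 by (intros; apply H; tauto); reflexivity | rewrite IHF by (intros; apply H; tauto); reflexivity]. Qed.

Lemma subst_eq_occ f g F : subst f F = subst g F -> forall x, occurs x F -> f x = g x.
Proof.
  induction F; simpl; intros H x Hx.
  - subst; exact H.
  - injection H as H1 H2. destruct Hx; [apply IHF1|apply IHF2]; auto.
  - injection H as H1. apply IHF; auto.
Qed.

Lemma subst_var F : subst Var F = F.
Proof. induction F; simpl; congruence. Qed.

Lemma occurs_subst x s F : occurs x (subst s F) -> exists y, occurs y F /\ occurs x (s y).
Proof. induction F; simpl; intros H; [exists n; auto | destruct H as [H|H]; [destruct (IHF1 H) as [y [? ?]]|destruct (IHF2 H) as [y [? ?]]]; exists y; auto | auto]. Qed.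

Lemma occurs_subst2 x y s F : occurs y F -> occurs x (s y) -> occurs x (subst s F).
Proof. induction F; simpl; intros H1 H2; [subst; auto | destruct H1; auto | auto]. Qed.

Fixpoint vars (f : form) : list nat :=
  match f with Var x => [x] | Imp a b => vars a ++ vars b | Neg a => vars a end.

Lemma occurs_vars x f : occurs x f <-> In x (vars f).
Proof. induction f; simpl; [intuition | rewrite in_app_iff; tauto | tauto]. Qed.

Definition occursb x f := existsb (Nat.eqb x) (vars f).
Lemma occursb_spec x f : occursb x f = true <-> occurs x f.
Proof.
  unfold occursb. rewrite existsb_exists, occurs_vars. split.
  - intros [y [H1 H2]]. apply Nat.eqb_eq in H2. subst; auto.
  - intros H. exists x. rewrite Nat.eqb_refl. auto.
Qed.
Lemma occursb_false x f : occursb x f = false <-> ~ occurs x f.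
Proof. rewrite <- occursb_spec. destruct (occursb x f); intuition congruence. Qed.

Definition disjb (P Q : form) : bool := forallb (fun x => negb (occursb x Q)) (vars P).
Lemma disjb_ok P Q : disjb P Q = true -> forall x, occurs x P -> ~ occurs x Q.
Proof.
  unfold disjb. rewrite forallb_forall. intros H x H1. rewrite occurs_vars in H1.
  specialize (H x H1). apply negb_true_iff in H. apply occursb_false; auto.
Qed.

Lemma variant_refl F : variant F F.
Proof. exists (fun x => x). split. exists (fun x => x). auto. unfold rename. symmetry. apply subst_var. Qed.

Lemma renaming_variant p F : renaming p -> variant F (rename p F).
Proof. intros. exists p. auto. Qed.

Lemma rename_rename p q F : rename p (rename q F) = rename (fun x => p (q x)) F.
Proof. unfold rename. rewrite subst_subst. reflexivity. Qed.

Lemma renaming_comp p q : renaming p -> renaming q -> renaming (fun x => p (q x)).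
Proof.
  intros [p' Hp] [q' Hq]. exists (fun x => q' (p' x)). intros x. split.
  - rewrite (proj1 (Hp _)). apply Hq.
  - rewrite (proj2 (Hq _)). apply Hp.
Qed.

Lemma variant_trans F G H : variant F G -> variant G H -> variant F H.
Proof.
  intros [p [Hp ->]] [q [Hq ->]]. exists (fun x => q (p x)). split.
  apply renaming_comp; auto. apply rename_rename.
Qed.

Definition swap a b x := if Nat.eqb x a then b else if Nat.eqb x b then a else x.
Lemma swap_invol a b x : swap a b (swap a b x) = x.
Proof. unfold swap.
  destruct (Nat.eqb_spec x a) as [->|H1].
  - rewrite Nat.eqb_refl. destruct (Nat.eqb_spec b a); subst; auto; rewrite ?Nat.eqb_refl; auto.
  - destruct (Nat.eqb_spec x b) as [->|H2].
    + rewrite Nat.eqb_refl. auto.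
    + destruct (Nat.eqb_spec x a); [congruence|]. destruct (Nat.eqb_spec x b); [congruence|]. auto.
Qed.
Lemma renaming_swap a b : renaming (swap a b).
Proof. exists (swap a b). intros; split; apply swap_invol. Qed.

Definition swaps (l : list (nat * nat)) (x : nat) : nat :=
  fold_left (fun y ab => swap (fst ab) (snd ab) y) l x.
Lemma renaming_swaps l : renaming (swaps l).
Proof.
  induction l as [|[a b] l IH] using rev_ind.
  - exists (fun x => x). unfold swaps. simpl. auto.
  - unfold swaps. assert (E: forall x, fold_left (fun y ab => swap (fst ab) (snd ab) y) (l ++ [(a,b)]) x
       = swap a b (swaps l x)). { intros. rewrite fold_left_app. reflexivity. }
    destruct IH as [q Hq]. exists (fun x => q (swap a b x)). intros x. rewrite !E. split.
    + rewrite swap_invol. apply Hq.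
    + rewrite (proj2 (Hq _)). apply swap_invol.
Qed.

Definition bswap (K g x : nat) : nat :=
  if Nat.ltb x g then x + K else if andb (Nat.leb K x) (Nat.ltb x (K + g)) then x - K else x.
Lemma bswap_invol K g x : g <= K -> bswap K g (bswap K g x) = x.
Proof.
  intros Hg. unfold bswap.
  destruct (Nat.ltb_spec x g); simpl.
  - destruct (Nat.ltb_spec (x + K) g); [lia|]. destruct (Nat.leb_spec K (x+K)); [|lia].
    destruct (Nat.ltb_spec (x+K) (K+g)); [|lia]. simpl. lia.
  - destruct (Nat.leb_spec K x); destruct (Nat.ltb_spec x (K+g)); simpl.
    + destruct (Nat.ltb_spec (x - K) g); [lia|lia].
    + destruct (Nat.ltb_spec x g); [lia|]. destruct (Nat.leb_spec K x); [|lia].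
      destruct (Nat.ltb_spec x (K+g)); [lia|]. reflexivity.
    + destruct (Nat.ltb_spec x g); [lia|]. destruct (Nat.leb_spec K x); [lia|]. reflexivity.
    + destruct (Nat.ltb_spec x g); [lia|]. destruct (Nat.leb_spec K x); [lia|]. reflexivity.
Qed.
Lemma renaming_bswap K g : g <= K -> renaming (bswap K g).
Proof. intros. exists (bswap K g). intros; split; apply bswap_invol; auto. Qed.

Lemma occurs_rename x p F : occurs x (rename p F) <-> exists y, occurs y F /\ x = p y.
Proof.
  unfold rename. split.
  - intros H. destruct (occurs_subst _ _ _ H) as [y [H1 H2]]. simpl in H2. eauto.
  - intros [y [H1 ->]]. eapply occurs_subst2; eauto. simpl. auto.
Qed.

Definition upd (s : nat -> form) (a : nat) (F : form) : nat -> form :=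
  fun x => if Nat.eqb x a then F else s x.
Arguments upd : simpl never.
Lemma upd_eq s a F : upd s a F a = F.
Proof. unfold upd. rewrite Nat.eqb_refl. auto. Qed.
Lemma upd_neq s a F x : x <> a -> upd s a F x = s x.
Proof. unfold upd. intros H. destruct (Nat.eqb_spec x a); congruence. Qed.

Lemma cd_M1 P Q p A B s :
  renaming p -> rename p P = Imp A B ->
  (forall x, occurs x (Imp A B) -> ~ occurs x Q) ->
  subst s A = Q ->
  (forall x, occurs x B -> ~ occurs x A -> s x = Var x) ->
  cd P Q (subst s B).
Proof.
  intros Hp HP Hd HA HB.
  set (s' := fun x => if occursb x A then s x else Var x).
  exists (Imp A B), Q, A, B, s'. repeat split.
  - exists p; auto.
  - apply variant_refl.
  - exact Hd.
  - unfold unifier. transitivity (subst s A).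
    + apply subst_ext_occ. intros x Hx. unfold s'. apply occursb_spec in Hx. rewrite Hx. auto.
    + rewrite HA. rewrite <- (subst_var Q) at 1. symmetry. apply subst_ext_occ.
      intros x Hx. unfold s'. destruct (occursb x A) eqn:E; auto.
      apply occursb_spec in E. exfalso. apply (Hd x); simpl; auto.
  - intros t Ht. exists t. intros x. unfold s'. destruct (occursb x A) eqn:E; [|reflexivity].
    apply occursb_spec in E. unfold unifier in Ht. rewrite <- HA, subst_subst in Ht.
    exact (subst_eq_occ _ _ _ Ht x E).
  - replace (subst s' B) with (subst s B). apply variant_refl.
    apply subst_ext_occ. intros x Hx. unfold s'. destruct (occursb x A) eqn:E; auto.
    apply HB; auto. apply occursb_false; auto.
Qed.

Lemma cd_M2 P Q q A B s :
  P = Imp A B -> renaming q ->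
  (forall x, occurs x (Imp A B) -> ~ occurs x (rename q Q)) ->
  subst s (rename q Q) = A ->
  cd P Q B.
Proof.
  intros HP Hq Hd HA. set (Q' := rename q Q) in *.
  set (s' := fun x => if occursb x Q' then s x else Var x).
  assert (EB : forall F, (forall x, occurs x F -> ~ occurs x Q') -> subst s' F = F).
  { intros F HF. rewrite <- (subst_var F) at 2. apply subst_ext_occ. intros x Hx.
    unfold s'. destruct (occursb x Q') eqn:E; auto. apply occursb_spec in E. exfalso; eapply HF; eauto. }
  exists (Imp A B), Q', A, B, s'. repeat split.
  - subst; apply variant_refl.
  - exists q; auto.
  - exact Hd.
  - unfold unifier. rewrite EB by (intros; apply Hd; simpl; auto).
    rewrite <- HA. apply subst_ext_occ. intros x Hx. unfold s'. apply occursb_spec in Hx. rewrite Hx; auto.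
  - intros t Ht. exists t. intros x. unfold s'. destruct (occursb x Q') eqn:E; [|reflexivity].
    apply occursb_spec in E. unfold unifier in Ht. rewrite <- HA, subst_subst in Ht.
    symmetry. exact (subst_eq_occ _ _ _ Ht x E).
  - rewrite EB by (intros; apply Hd; simpl; auto). apply variant_refl.
Qed.

Lemma cd_G P Q q A B s :
  P = Imp A B -> renaming q ->
  (forall x, occurs x (Imp A B) -> ~ occurs x (rename q Q)) ->
  subst s A = Q ->
  (forall x, occurs x Q -> occurs x A) ->
  (forall x, occurs x Q -> s x = Var x) ->
  (forall x, ~ occurs x A -> s x = Var x) ->
  cd P Q (subst s B).
Proof.
  intros HP [qi Hq] Hd HA HQA HQs HAs. set (Q' := rename q Q) in *.
  set (s' := fun x => if occursb x Q' then Var (qi x) else s x).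
  exists (Imp A B), Q', A, B, s'. repeat split.
  - subst; apply variant_refl.
  - exists q; split; [exists qi; auto| reflexivity].
  - exact Hd.
  - unfold unifier. transitivity Q.
    + rewrite <- HA. apply subst_ext_occ. intros x Hx. unfold s'.
      destruct (occursb x Q') eqn:E; auto. apply occursb_spec in E. exfalso; eapply Hd; simpl; eauto.
    + unfold Q', rename. rewrite subst_subst. rewrite <- (subst_var Q) at 1. apply subst_ext_occ.
      intros y Hy. simpl. unfold s'. replace (occursb (q y) Q') with true.
      rewrite (proj1 (Hq y)). auto. symmetry. apply occursb_spec. apply occurs_rename. eauto.
  - intros t Ht. exists t. unfold unifier in Ht.
    assert (H1 : forall x, occurs x A -> t x = subst t (rename q (s x))).
    { intros x Hx. unfold Q' in Ht. rewrite <- HA in Ht. unfold rename in Ht.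
      rewrite !subst_subst in Ht. rewrite (subst_eq_occ _ _ _ Ht x Hx). unfold rename. rewrite subst_subst. reflexivity. }
    assert (H2 : forall y, occurs y Q -> t y = t (q y)).
    { intros y Hy. rewrite (H1 y (HQA y Hy)). rewrite HQs by auto. reflexivity. }
    intros x. unfold s'. destruct (occursb x Q') eqn:E.
    + apply occursb_spec in E. apply occurs_rename in E. destruct E as [y [Hy ->]].
      simpl. rewrite (proj1 (Hq y)). symmetry. auto.
    + destruct (occursb x A) eqn:EA.
      * apply occursb_spec in EA. rewrite (H1 x EA). unfold rename. rewrite subst_subst.
        apply subst_ext_occ. intros y Hy. simpl. symmetry. apply H2.
        rewrite <- HA. eapply occurs_subst2; eauto.
      * apply occursb_false in EA. rewrite HAs; auto.
  - replace (subst s' B) with (subst s B). apply variant_refl.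
    apply subst_ext_occ. intros x Hx. unfold s'. destruct (occursb x Q') eqn:E; auto.
    apply occursb_spec in E. exfalso; eapply Hd; simpl; eauto.
Qed.

Lemma cd_by P Q A B s R (r : nat -> nat) :
  P = Imp A B ->
  disjb P (rename (bswap 50 50) Q) = true ->
  subst s A = subst s (rename (bswap 50 50) Q) ->
  (forall t, subst t A = subst t (rename (bswap 50 50) Q) -> forall x, t x = subst t (s x)) ->
  renaming r -> R = rename r (subst s B) -> cd P Q R.
Proof.
  intros HP Hd Hu Hm Hr HR. exists P, (rename (bswap 50 50) Q), A, B, s. repeat split.
  - apply variant_refl.
  - apply renaming_variant, renaming_bswap; lia.
  - apply disjb_ok; auto.
  - exact HP.
  - exact Hu.
  - intros t Ht. exists t. apply Hm; auto.
  - subst R. apply renaming_variant; auto.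
Qed.

Lemma derivation_app l1 l2 : derivation l1 -> derivation l2 -> derivation (l1 ++ l2).
Proof.
  intros H1 H2. induction H2.
  - rewrite app_nil_r; auto.
  - rewrite app_assoc. constructor; auto.
  - rewrite app_assoc. eapply deriv_cd; eauto; apply in_or_app; auto.
Qed.

Section Good.
Variable OK : form -> Prop.
Definition goodP F := exists l, derivation (l ++ [F]) /\ forall G, In G (l ++ [F]) -> OK G.

Lemma goodP_ax F : is_axiom F -> OK F -> goodP F.
Proof. intros H1 H2. exists []. split. simpl. apply (deriv_ax [] F deriv_nil H1).
  simpl. intros G [<-|[]]; auto. Qed.

Lemma goodP_cd P Q R : goodP P -> goodP Q -> cd P Q R -> OK R -> goodP R.
Proof.
  intros [l1 [D1 O1]] [l2 [D2 O2]] Hc HR.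
  exists ((l1 ++ [P]) ++ (l2 ++ [Q])). split.
  - apply deriv_cd with P Q; auto. apply derivation_app; auto.
    apply in_or_app; left; apply in_or_app; right; simpl; auto.
    apply in_or_app; right; apply in_or_app; right; simpl; auto.
  - intros G HG. apply in_app_or in HG. destruct HG as [HG|[<-|[]]]; auto.
    apply in_app_or in HG. destruct HG; auto.
Qed.

Lemma goodP_mono (OK2 : form -> Prop) F : (forall G, OK G -> OK2 G) -> goodP F ->
  exists l, derivation (l ++ [F]) /\ forall G, In G (l ++ [F]) -> OK2 G.
Proof. intros H [l [D O]]. exists l; split; auto. Qed.
End Good.

Fixpoint nnfree (f : form) : bool :=
  match f with
  | Var _ => true
  | Imp a b => nnfree a && nnfree b
  | Neg (Neg _) => false
  | Neg a => nnfree a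
  end.

Lemma nnfree_sub t F : nnfree F = true -> subform (Neg (Neg t)) F -> False.
Proof.
  intros H1 H2. remember (Neg (Neg t)) as g. induction H2; subst.
  - simpl in H1. discriminate.
  - simpl in H1. apply andb_true_iff in H1. tauto.
  - simpl in H1. apply andb_true_iff in H1. tauto.
  - destruct a; simpl in H1; try discriminate; apply IHsubform; auto.
Qed.

Definition goodg := goodP (fun G => nnfree G = true).

Ltac force_tac := intros t Ht x; unfold rename, bswap in Ht; simpl in Ht; unfold upd;
  repeat match goal with |- context [Nat.eqb x ?n] => destruct (Nat.eqb_spec x n) as [->|?] end;
  simpl; congruence.
Lemma gl_0 : goodg (Imp (Imp (Var 0) (Imp (Var 1) (Var 2))) (Imp (Imp (Var 0) (Var 1)) (Imp (Var 0) (Var 2)))).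
Proof. apply goodP_ax; [exists H2; split; [simpl; tauto | exact (variant_refl _)] | reflexivity]. Qed.
Lemma gl_1 : goodg (Imp (Var 0) (Imp (Var 1) (Var 0))).
Proof. apply goodP_ax; [exists H1; split; [simpl; tauto | exact (variant_refl _)] | reflexivity]. Qed.
Lemma gl_2 : goodg (Imp (Imp (Var 0) (Var 1)) (Imp (Var 0) (Var 0))).
Proof. eapply goodP_cd; [exact gl_0 | exact gl_1 | | reflexivity].
  apply (cd_by _ _ (Imp (Var 0) (Imp (Var 1) (Var 2))) (Imp (Imp (Var 0) (Var 1)) (Imp (Var 0) (Var 2))) (upd (upd (upd Var 2 (Var 50)) 1 (Var 51)) 0 (Var 50)) _ (swaps [(50,0); (51,1)])); [reflexivity|reflexivity|reflexivity|force_tac|apply renaming_swaps|reflexivity].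
Qed.
Lemma gl_3 : goodg (Imp (Var 0) (Var 0)).
Proof. eapply goodP_cd; [exact gl_2 | exact gl_1 | | reflexivity].
  apply (cd_by _ _ (Imp (Var 0) (Var 1)) (Imp (Var 0) (Var 0)) (upd (upd Var 1 (Imp (Var 51) (Var 50))) 0 (Var 50)) _ (swaps [(50,0)])); [reflexivity|reflexivity|reflexivity|force_tac|apply renaming_swaps|reflexivity].
Qed.
Lemma gl_4 : goodg (Imp (Var 0) (Imp (Imp (Var 1) (Imp (Var 2) (Var 3))) (Imp (Imp (Var 1) (Var 2)) (Imp (Var 1) (Var 3))))).
Proof. eapply goodP_cd; [exact gl_1 | exact gl_0 | | reflexivity].
  apply (cd_by _ _ (Var 0) (Imp (Var 1) (Var 0)) (upd Var 0 (Imp (Imp (Var 50) (Imp (Var 51) (Var 52))) (Imp (Imp (Var 50) (Var 51)) (Imp (Var 50) (Var 52))))) _ (swaps [(1,0); (50,1); (51,2); (52,3)])); [reflexivity|reflexivity|reflexivity|force_tac|apply renaming_swaps|reflexivity].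
Qed.
Lemma gl_5 : goodg (Imp (Imp (Var 0) (Imp (Var 1) (Imp (Var 2) (Var 3)))) (Imp (Var 0) (Imp (Imp (Var 1) (Var 2)) (Imp (Var 1) (Var 3))))).
Proof. eapply goodP_cd; [exact gl_0 | exact gl_4 | | reflexivity].
  apply (cd_by _ _ (Imp (Var 0) (Imp (Var 1) (Var 2))) (Imp (Imp (Var 0) (Var 1)) (Imp (Var 0) (Var 2))) (upd (upd (upd Var 2 (Imp (Imp (Var 51) (Var 52)) (Imp (Var 51) (Var 53)))) 1 (Imp (Var 51) (Imp (Var 52) (Var 53)))) 0 (Var 50)) _ (swaps [(50,0); (51,1); (52,2); (53,3)])); [reflexivity|reflexivity|reflexivity|force_tac|apply renaming_swaps|reflexivity].
Qed.
Lemma gl_6 : goodg (Imp (Var 0) (Imp (Var 1) (Imp (Var 2) (Var 1)))).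
Proof. eapply goodP_cd; [exact gl_1 | exact gl_1 | | reflexivity].
  apply (cd_by _ _ (Var 0) (Imp (Var 1) (Var 0)) (upd Var 0 (Imp (Var 50) (Imp (Var 51) (Var 50)))) _ (swaps [(1,0); (50,1); (51,2)])); [reflexivity|reflexivity|reflexivity|force_tac|apply renaming_swaps|reflexivity].
Qed.
Lemma gl_7 : goodg (Imp (Imp (Var 0) (Var 1)) (Imp (Var 0) (Imp (Var 2) (Var 1)))).
Proof. eapply goodP_cd; [exact gl_0 | exact gl_6 | | reflexivity].
  apply (cd_by _ _ (Imp (Var 0) (Imp (Var 1) (Var 2))) (Imp (Imp (Var 0) (Var 1)) (Imp (Var 0) (Var 2))) (upd (upd (upd Var 2 (Imp (Var 52) (Var 51))) 1 (Var 51)) 0 (Var 50)) _ (swaps [(50,0); (51,1); (52,2)])); [reflexivity|reflexivity|reflexivity|force_tac|apply renaming_swaps|reflexivity].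
Qed.
Lemma gl_8 : goodg (Imp (Imp (Var 0) (Var 1)) (Imp (Imp (Var 2) (Var 0)) (Imp (Var 2) (Var 1)))).
Proof. eapply goodP_cd; [exact gl_5 | exact gl_1 | | reflexivity].
  apply (cd_by _ _ (Imp (Var 0) (Imp (Var 1) (Imp (Var 2) (Var 3)))) (Imp (Var 0) (Imp (Imp (Var 1) (Var 2)) (Imp (Var 1) (Var 3)))) (upd (upd (upd Var 50 (Imp (Var 2) (Var 3))) 1 (Var 51)) 0 (Imp (Var 2) (Var 3))) _ (swaps [(2,0); (3,1); (51,2)])); [reflexivity|reflexivity|reflexivity|force_tac|apply renaming_swaps|reflexivity].
Qed.
Lemma gl_9 : goodg (Imp (Imp (Var 0) (Var 1)) (Imp (Var 2) (Imp (Imp (Var 3) (Var 0)) (Imp (Var 3) (Var 1))))).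
Proof. eapply goodP_cd; [exact gl_7 | exact gl_8 | | reflexivity].
  apply (cd_by _ _ (Imp (Var 0) (Var 1)) (Imp (Var 0) (Imp (Var 2) (Var 1))) (upd (upd Var 1 (Imp (Imp (Var 52) (Var 50)) (Imp (Var 52) (Var 51)))) 0 (Imp (Var 50) (Var 51))) _ (swaps [(50,0); (51,1); (52,3)])); [reflexivity|reflexivity|reflexivity|force_tac|apply renaming_swaps|reflexivity].
Qed.
Lemma gl_10 : goodg (Imp (Imp (Var 0) (Var 1)) (Imp (Imp (Var 2) (Imp (Var 3) (Var 0))) (Imp (Var 2) (Imp (Var 3) (Var 1))))).
Proof. eapply goodP_cd; [exact gl_5 | exact gl_9 | | reflexivity].
  apply (cd_by _ _ (Imp (Var 0) (Imp (Var 1) (Imp (Var 2) (Var 3)))) (Imp (Var 0) (Imp (Imp (Var 1) (Var 2)) (Imp (Var 1) (Var 3)))) (upd (upd (upd (upd Var 3 (Imp (Var 53) (Var 51))) 2 (Imp (Var 53) (Var 50))) 1 (Var 52)) 0 (Imp (Var 50) (Var 51))) _ (swaps [(50,0); (51,1); (52,2); (53,3)])); [reflexivity|reflexivity|reflexivity|force_tac|apply renaming_swaps|reflexivity].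
Qed.
Lemma gl_11 : goodg (Imp (Imp (Imp (Var 0) (Var 1)) (Imp (Var 2) (Imp (Var 3) (Var 0)))) (Imp (Imp (Var 0) (Var 1)) (Imp (Var 2) (Imp (Var 3) (Var 1))))).
Proof. eapply goodP_cd; [exact gl_0 | exact gl_10 | | reflexivity].
  apply (cd_by _ _ (Imp (Var 0) (Imp (Var 1) (Var 2))) (Imp (Imp (Var 0) (Var 1)) (Imp (Var 0) (Var 2))) (upd (upd (upd Var 2 (Imp (Var 52) (Imp (Var 53) (Var 51)))) 1 (Imp (Var 52) (Imp (Var 53) (Var 50)))) 0 (Imp (Var 50) (Var 51))) _ (swaps [(50,0); (51,1); (52,2); (53,3)])); [reflexivity|reflexivity|reflexivity|force_tac|apply renaming_swaps|reflexivity].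
Qed.
Lemma gl_12 : goodg (Imp (Var 0) (Imp (Imp (Imp (Var 1) (Var 2)) (Imp (Var 3) (Imp (Var 4) (Var 1)))) (Imp (Imp (Var 1) (Var 2)) (Imp (Var 3) (Imp (Var 4) (Var 2)))))).
Proof. eapply goodP_cd; [exact gl_1 | exact gl_11 | | reflexivity].
  apply (cd_by _ _ (Var 0) (Imp (Var 1) (Var 0)) (upd Var 0 (Imp (Imp (Imp (Var 50) (Var 51)) (Imp (Var 52) (Imp (Var 53) (Var 50)))) (Imp (Imp (Var 50) (Var 51)) (Imp (Var 52) (Imp (Var 53) (Var 51)))))) _ (swaps [(1,0); (50,1); (51,2); (52,3); (53,4)])); [reflexivity|reflexivity|reflexivity|force_tac|apply renaming_swaps|reflexivity].
Qed.
Lemma gl_13 : goodg (Imp (Imp (Var 0) (Imp (Imp (Var 1) (Var 2)) (Imp (Var 3) (Imp (Var 4) (Var 1))))) (Imp (Var 0) (Imp (Imp (Var 1) (Var 2)) (Imp (Var 3) (Imp (Var 4) (Var 2)))))).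
Proof. eapply goodP_cd; [exact gl_0 | exact gl_12 | | reflexivity].
  apply (cd_by _ _ (Imp (Var 0) (Imp (Var 1) (Var 2))) (Imp (Imp (Var 0) (Var 1)) (Imp (Var 0) (Var 2))) (upd (upd (upd Var 2 (Imp (Imp (Var 51) (Var 52)) (Imp (Var 53) (Imp (Var 54) (Var 52))))) 1 (Imp (Imp (Var 51) (Var 52)) (Imp (Var 53) (Imp (Var 54) (Var 51))))) 0 (Var 50)) _ (swaps [(50,0); (51,1); (52,2); (53,3); (54,4)])); [reflexivity|reflexivity|reflexivity|force_tac|apply renaming_swaps|reflexivity].
Qed.
Lemma gl_14 : goodg (Imp (Imp (Imp (Var 0) (Var 1)) (Imp (Var 2) (Var 0))) (Imp (Imp (Var 0) (Var 1)) (Imp (Var 2) (Var 1)))).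
Proof. eapply goodP_cd; [exact gl_0 | exact gl_8 | | reflexivity].
  apply (cd_by _ _ (Imp (Var 0) (Imp (Var 1) (Var 2))) (Imp (Imp (Var 0) (Var 1)) (Imp (Var 0) (Var 2))) (upd (upd (upd Var 2 (Imp (Var 52) (Var 51))) 1 (Imp (Var 52) (Var 50))) 0 (Imp (Var 50) (Var 51))) _ (swaps [(50,0); (51,1); (52,2)])); [reflexivity|reflexivity|reflexivity|force_tac|apply renaming_swaps|reflexivity].
Qed.
Lemma gl_15 : goodg (Imp (Var 0) (Imp (Imp (Imp (Var 1) (Var 2)) (Imp (Var 3) (Var 1))) (Imp (Imp (Var 1) (Var 2)) (Imp (Var 3) (Var 2))))).
Proof. eapply goodP_cd; [exact gl_1 | exact gl_14 | | reflexivity].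
  apply (cd_by _ _ (Var 0) (Imp (Var 1) (Var 0)) (upd Var 0 (Imp (Imp (Imp (Var 50) (Var 51)) (Imp (Var 52) (Var 50))) (Imp (Imp (Var 50) (Var 51)) (Imp (Var 52) (Var 51))))) _ (swaps [(1,0); (50,1); (51,2); (52,3)])); [reflexivity|reflexivity|reflexivity|force_tac|apply renaming_swaps|reflexivity].
Qed.
Lemma gl_16 : goodg (Imp (Imp (Var 0) (Imp (Imp (Var 1) (Var 2)) (Imp (Var 3) (Var 1)))) (Imp (Var 0) (Imp (Imp (Var 1) (Var 2)) (Imp (Var 3) (Var 2))))).
Proof. eapply goodP_cd; [exact gl_0 | exact gl_15 | | reflexivity].
  apply (cd_by _ _ (Imp (Var 0) (Imp (Var 1) (Var 2))) (Imp (Imp (Var 0) (Var 1)) (Imp (Var 0) (Var 2))) (upd (upd (upd Var 2 (Imp (Imp (Var 51) (Var 52)) (Imp (Var 53) (Var 52)))) 1 (Imp (Imp (Var 51) (Var 52)) (Imp (Var 53) (Var 51)))) 0 (Var 50)) _ (swaps [(50,0); (51,1); (52,2); (53,3)])); [reflexivity|reflexivity|reflexivity|force_tac|apply renaming_swaps|reflexivity].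
Qed.
Lemma gl_17 : goodg (Imp (Imp (Var 0) (Var 1)) (Imp (Imp (Var 1) (Var 2)) (Imp (Var 0) (Var 2)))).
Proof. eapply goodP_cd; [exact gl_16 | exact gl_1 | | reflexivity].
  apply (cd_by _ _ (Imp (Var 0) (Imp (Imp (Var 1) (Var 2)) (Imp (Var 3) (Var 1)))) (Imp (Var 0) (Imp (Imp (Var 1) (Var 2)) (Imp (Var 3) (Var 2)))) (upd (upd (upd Var 50 (Imp (Var 3) (Var 1))) 51 (Imp (Var 1) (Var 2))) 0 (Imp (Var 3) (Var 1))) _ (swaps [(3,0)])); [reflexivity|reflexivity|reflexivity|force_tac|apply renaming_swaps|reflexivity].
Qed.
Lemma gl_18 : goodg (Imp (Imp (Var 0) (Var 1)) (Imp (Var 2) (Imp (Imp (Var 1) (Var 3)) (Imp (Var 0) (Var 3))))).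
Proof. eapply goodP_cd; [exact gl_7 | exact gl_17 | | reflexivity].
  apply (cd_by _ _ (Imp (Var 0) (Var 1)) (Imp (Var 0) (Imp (Var 2) (Var 1))) (upd (upd Var 1 (Imp (Imp (Var 51) (Var 52)) (Imp (Var 50) (Var 52)))) 0 (Imp (Var 50) (Var 51))) _ (swaps [(50,0); (51,1); (52,3)])); [reflexivity|reflexivity|reflexivity|force_tac|apply renaming_swaps|reflexivity].
Qed.
Lemma gl_19 : goodg (Imp (Imp (Var 0) (Var 1)) (Imp (Imp (Var 2) (Var 3)) (Imp (Imp (Var 1) (Var 2)) (Imp (Var 0) (Var 3))))).
Proof. eapply goodP_cd; [exact gl_13 | exact gl_18 | | reflexivity].
  apply (cd_by _ _ (Imp (Var 0) (Imp (Imp (Var 1) (Var 2)) (Imp (Var 3) (Imp (Var 4) (Var 1))))) (Imp (Var 0) (Imp (Imp (Var 1) (Var 2)) (Imp (Var 3) (Imp (Var 4) (Var 2))))) (upd (upd (upd (upd (upd Var 1 (Var 53)) 4 (Var 50)) 3 (Imp (Var 51) (Var 53))) 52 (Imp (Var 53) (Var 2))) 0 (Imp (Var 50) (Var 51))) _ (swaps [(50,0); (51,1); (53,2); (53,3)])); [reflexivity|reflexivity|reflexivity|force_tac|apply renaming_swaps|reflexivity].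
Qed.
Lemma gl_20 : goodg (Imp (Imp (Var 0) (Neg (Var 0))) (Neg (Var 0))).
Proof. apply goodP_ax; [exists H3; split; [simpl; tauto | exact (variant_refl _)] | reflexivity]. Qed.
Lemma gl_21 : goodg (Imp (Var 0) (Imp (Imp (Var 1) (Neg (Var 1))) (Neg (Var 1)))).
Proof. eapply goodP_cd; [exact gl_1 | exact gl_20 | | reflexivity].
  apply (cd_by _ _ (Var 0) (Imp (Var 1) (Var 0)) (upd Var 0 (Imp (Imp (Var 50) (Neg (Var 50))) (Neg (Var 50)))) _ (swaps [(1,0); (50,1)])); [reflexivity|reflexivity|reflexivity|force_tac|apply renaming_swaps|reflexivity].
Qed.
Lemma gl_22 : goodg (Imp (Imp (Var 0) (Imp (Var 1) (Neg (Var 1)))) (Imp (Var 0) (Neg (Var 1)))).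
Proof. eapply goodP_cd; [exact gl_0 | exact gl_21 | | reflexivity].
  apply (cd_by _ _ (Imp (Var 0) (Imp (Var 1) (Var 2))) (Imp (Imp (Var 0) (Var 1)) (Imp (Var 0) (Var 2))) (upd (upd (upd Var 2 (Neg (Var 51))) 1 (Imp (Var 51) (Neg (Var 51)))) 0 (Var 50)) _ (swaps [(50,0); (51,1)])); [reflexivity|reflexivity|reflexivity|force_tac|apply renaming_swaps|reflexivity].
Qed.
Lemma gl_23 : goodg (Imp (Var 0) (Imp (Imp (Var 1) (Imp (Var 2) (Neg (Var 2)))) (Imp (Var 1) (Neg (Var 2))))).
Proof. eapply goodP_cd; [exact gl_1 | exact gl_22 | | reflexivity].
  apply (cd_by _ _ (Var 0) (Imp (Var 1) (Var 0)) (upd Var 0 (Imp (Imp (Var 50) (Imp (Var 51) (Neg (Var 51)))) (Imp (Var 50) (Neg (Var 51))))) _ (swaps [(1,0); (50,1); (51,2)])); [reflexivity|reflexivity|reflexivity|force_tac|apply renaming_swaps|reflexivity].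
Qed.
Lemma gl_24 : goodg (Imp (Imp (Var 0) (Imp (Var 1) (Imp (Var 2) (Neg (Var 2))))) (Imp (Var 0) (Imp (Var 1) (Neg (Var 2))))).
Proof. eapply goodP_cd; [exact gl_0 | exact gl_23 | | reflexivity].
  apply (cd_by _ _ (Imp (Var 0) (Imp (Var 1) (Var 2))) (Imp (Imp (Var 0) (Var 1)) (Imp (Var 0) (Var 2))) (upd (upd (upd Var 2 (Imp (Var 51) (Neg (Var 52)))) 1 (Imp (Var 51) (Imp (Var 52) (Neg (Var 52))))) 0 (Var 50)) _ (swaps [(50,0); (51,1); (52,2)])); [reflexivity|reflexivity|reflexivity|force_tac|apply renaming_swaps|reflexivity].
Qed.
Lemma gl_25 : goodg (Imp (Var 0) (Imp (Neg (Var 0)) (Var 1))).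
Proof. apply goodP_ax; [exists H4; split; [simpl; tauto | exact (variant_refl _)] | reflexivity]. Qed.
Lemma gl_26 : goodg (Imp (Var 0) (Imp (Var 1) (Imp (Neg (Var 1)) (Var 2)))).
Proof. eapply goodP_cd; [exact gl_1 | exact gl_25 | | reflexivity].
  apply (cd_by _ _ (Var 0) (Imp (Var 1) (Var 0)) (upd Var 0 (Imp (Var 50) (Imp (Neg (Var 50)) (Var 51)))) _ (swaps [(1,0); (50,1); (51,2)])); [reflexivity|reflexivity|reflexivity|force_tac|apply renaming_swaps|reflexivity].
Qed.
Lemma gl_27 : goodg (Imp (Imp (Var 0) (Var 1)) (Imp (Var 0) (Imp (Neg (Var 1)) (Var 2)))).
Proof. eapply goodP_cd; [exact gl_0 | exact gl_26 | | reflexivity].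
  apply (cd_by _ _ (Imp (Var 0) (Imp (Var 1) (Var 2))) (Imp (Imp (Var 0) (Var 1)) (Imp (Var 0) (Var 2))) (upd (upd (upd Var 2 (Imp (Neg (Var 51)) (Var 52))) 1 (Var 51)) 0 (Var 50)) _ (swaps [(50,0); (51,1); (52,2)])); [reflexivity|reflexivity|reflexivity|force_tac|apply renaming_swaps|reflexivity].
Qed.
Lemma gl_28 : goodg (Imp (Imp (Var 0) (Var 1)) (Imp (Imp (Var 0) (Neg (Var 1))) (Imp (Var 0) (Var 2)))).
Proof. eapply goodP_cd; [exact gl_5 | exact gl_27 | | reflexivity].
  apply (cd_by _ _ (Imp (Var 0) (Imp (Var 1) (Imp (Var 2) (Var 3)))) (Imp (Var 0) (Imp (Imp (Var 1) (Var 2)) (Imp (Var 1) (Var 3)))) (upd (upd (upd (upd Var 3 (Var 52)) 2 (Neg (Var 51))) 1 (Var 50)) 0 (Imp (Var 50) (Var 51))) _ (swaps [(50,0); (51,1); (52,2)])); [reflexivity|reflexivity|reflexivity|force_tac|apply renaming_swaps|reflexivity].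
Qed.
Lemma gl_29 : goodg (Imp (Imp (Var 0) (Var 1)) (Imp (Var 2) (Imp (Imp (Var 0) (Neg (Var 1))) (Imp (Var 0) (Var 3))))).
Proof. eapply goodP_cd; [exact gl_7 | exact gl_28 | | reflexivity].
  apply (cd_by _ _ (Imp (Var 0) (Var 1)) (Imp (Var 0) (Imp (Var 2) (Var 1))) (upd (upd Var 1 (Imp (Imp (Var 50) (Neg (Var 51))) (Imp (Var 50) (Var 52)))) 0 (Imp (Var 50) (Var 51))) _ (swaps [(50,0); (51,1); (52,3)])); [reflexivity|reflexivity|reflexivity|force_tac|apply renaming_swaps|reflexivity].
Qed.
Lemma gl_30 : goodg (Imp (Imp (Var 0) (Var 1)) (Imp (Imp (Var 2) (Imp (Var 0) (Neg (Var 1)))) (Imp (Var 2) (Imp (Var 0) (Var 3))))).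
Proof. eapply goodP_cd; [exact gl_5 | exact gl_29 | | reflexivity].
  apply (cd_by _ _ (Imp (Var 0) (Imp (Var 1) (Imp (Var 2) (Var 3)))) (Imp (Var 0) (Imp (Imp (Var 1) (Var 2)) (Imp (Var 1) (Var 3)))) (upd (upd (upd (upd Var 3 (Imp (Var 50) (Var 53))) 2 (Imp (Var 50) (Neg (Var 51)))) 1 (Var 52)) 0 (Imp (Var 50) (Var 51))) _ (swaps [(50,0); (51,1); (52,2); (53,3)])); [reflexivity|reflexivity|reflexivity|force_tac|apply renaming_swaps|reflexivity].
Qed.
Lemma gl_31 : goodg (Imp (Imp (Imp (Var 0) (Var 1)) (Imp (Var 2) (Imp (Var 0) (Neg (Var 1))))) (Imp (Imp (Var 0) (Var 1)) (Imp (Var 2) (Imp (Var 0) (Var 3))))).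
Proof. eapply goodP_cd; [exact gl_0 | exact gl_30 | | reflexivity].
  apply (cd_by _ _ (Imp (Var 0) (Imp (Var 1) (Var 2))) (Imp (Imp (Var 0) (Var 1)) (Imp (Var 0) (Var 2))) (upd (upd (upd Var 2 (Imp (Var 52) (Imp (Var 50) (Var 53)))) 1 (Imp (Var 52) (Imp (Var 50) (Neg (Var 51))))) 0 (Imp (Var 50) (Var 51))) _ (swaps [(50,0); (51,1); (52,2); (53,3)])); [reflexivity|reflexivity|reflexivity|force_tac|apply renaming_swaps|reflexivity].
Qed.
Lemma gl_32 : goodg (Imp (Imp (Var 0) (Var 1)) (Imp (Neg (Var 1)) (Imp (Var 0) (Var 2)))).
Proof. eapply goodP_cd; [exact gl_31 | exact gl_6 | | reflexivity].
  apply (cd_by _ _ (Imp (Imp (Var 0) (Var 1)) (Imp (Var 2) (Imp (Var 0) (Neg (Var 1))))) (Imp (Imp (Var 0) (Var 1)) (Imp (Var 2) (Imp (Var 0) (Var 3)))) (upd (upd (upd (upd Var 51 (Neg (Var 1))) 0 (Var 52)) 2 (Neg (Var 1))) 50 (Imp (Var 52) (Var 1))) _ (swaps [(52,0); (3,2)])); [reflexivity|reflexivity|reflexivity|force_tac|apply renaming_swaps|reflexivity].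
Qed.
Lemma gl_33 : goodg (Imp (Imp (Var 0) (Var 1)) (Imp (Neg (Var 1)) (Neg (Var 0)))).
Proof. eapply goodP_cd; [exact gl_24 | exact gl_32 | | reflexivity].
  apply (cd_by _ _ (Imp (Var 0) (Imp (Var 1) (Imp (Var 2) (Neg (Var 2))))) (Imp (Var 0) (Imp (Var 1) (Neg (Var 2)))) (upd (upd (upd (upd Var 52 (Neg (Var 50))) 2 (Var 50)) 1 (Neg (Var 51))) 0 (Imp (Var 50) (Var 51))) _ (swaps [(50,0); (51,1)])); [reflexivity|reflexivity|reflexivity|force_tac|apply renaming_swaps|reflexivity].
Qed.
Lemma gl_34 : goodg (Imp (Var 0) (Imp (Var 1) (Imp (Var 2) (Var 0)))).
Proof. eapply goodP_cd; [exact gl_7 | exact gl_1 | | reflexivity].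
  apply (cd_by _ _ (Imp (Var 0) (Var 1)) (Imp (Var 0) (Imp (Var 2) (Var 1))) (upd (upd Var 1 (Imp (Var 51) (Var 50))) 0 (Var 50)) _ (swaps [(50,0); (2,1); (51,2)])); [reflexivity|reflexivity|reflexivity|force_tac|apply renaming_swaps|reflexivity].
Qed.
Lemma gl_35 : goodg (Imp (Var 0) (Imp (Imp (Var 1) (Var 2)) (Imp (Var 1) (Var 0)))).
Proof. eapply goodP_cd; [exact gl_5 | exact gl_34 | | reflexivity].
  apply (cd_by _ _ (Imp (Var 0) (Imp (Var 1) (Imp (Var 2) (Var 3)))) (Imp (Var 0) (Imp (Imp (Var 1) (Var 2)) (Imp (Var 1) (Var 3)))) (upd (upd (upd (upd Var 3 (Var 50)) 2 (Var 52)) 1 (Var 51)) 0 (Var 50)) _ (swaps [(50,0); (51,1); (52,2)])); [reflexivity|reflexivity|reflexivity|force_tac|apply renaming_swaps|reflexivity].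
Qed.
Lemma gl_36 : goodg (Imp (Imp (Var 0) (Imp (Var 1) (Var 2))) (Imp (Var 0) (Imp (Var 1) (Var 0)))).
Proof. eapply goodP_cd; [exact gl_0 | exact gl_35 | | reflexivity].
  apply (cd_by _ _ (Imp (Var 0) (Imp (Var 1) (Var 2))) (Imp (Imp (Var 0) (Var 1)) (Imp (Var 0) (Var 2))) (upd (upd (upd Var 2 (Imp (Var 51) (Var 50))) 1 (Imp (Var 51) (Var 52))) 0 (Var 50)) _ (swaps [(50,0); (51,1); (52,2)])); [reflexivity|reflexivity|reflexivity|force_tac|apply renaming_swaps|reflexivity].
Qed.
Lemma gl_37 : goodg (Imp (Imp (Var 0) (Var 0)) (Imp (Var 0) (Var 0))).
Proof. eapply goodP_cd; [exact gl_14 | exact gl_3 | | reflexivity].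
  apply (cd_by _ _ (Imp (Imp (Var 0) (Var 1)) (Imp (Var 2) (Var 0))) (Imp (Imp (Var 0) (Var 1)) (Imp (Var 2) (Var 1))) (upd (upd (upd Var 50 (Imp (Var 2) (Var 2))) 1 (Var 2)) 0 (Var 2)) _ (swaps [(2,0)])); [reflexivity|reflexivity|reflexivity|force_tac|apply renaming_swaps|reflexivity].
Qed.
Lemma gl_38 : goodg (Imp (Var 0) (Imp (Imp (Var 1) (Var 1)) (Imp (Var 1) (Var 1)))).
Proof. eapply goodP_cd; [exact gl_1 | exact gl_37 | | reflexivity].
  apply (cd_by _ _ (Var 0) (Imp (Var 1) (Var 0)) (upd Var 0 (Imp (Imp (Var 50) (Var 50)) (Imp (Var 50) (Var 50)))) _ (swaps [(1,0); (50,1)])); [reflexivity|reflexivity|reflexivity|force_tac|apply renaming_swaps|reflexivity].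
Qed.
Lemma gl_39 : goodg (Imp (Var 0) (Imp (Imp (Var 1) (Var 1)) (Var 0))).
Proof. eapply goodP_cd; [exact gl_36 | exact gl_38 | | reflexivity].
  apply (cd_by _ _ (Imp (Var 0) (Imp (Var 1) (Var 2))) (Imp (Var 0) (Imp (Var 1) (Var 0))) (upd (upd (upd Var 2 (Imp (Var 51) (Var 51))) 1 (Imp (Var 51) (Var 51))) 0 (Var 50)) _ (swaps [(50,0); (51,1)])); [reflexivity|reflexivity|reflexivity|force_tac|apply renaming_swaps|reflexivity].
Qed.
Lemma gl_40 : goodg (Imp (Imp (Imp (Var 0) (Var 1)) (Var 0)) (Imp (Imp (Var 0) (Var 1)) (Var 1))).
Proof. eapply goodP_cd; [exact gl_0 | exact gl_3 | | reflexivity].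
  apply (cd_by _ _ (Imp (Var 0) (Imp (Var 1) (Var 2))) (Imp (Imp (Var 0) (Var 1)) (Imp (Var 0) (Var 2))) (upd (upd Var 50 (Imp (Var 1) (Var 2))) 0 (Imp (Var 1) (Var 2))) _ (swaps [(1,0); (2,1)])); [reflexivity|reflexivity|reflexivity|force_tac|apply renaming_swaps|reflexivity].
Qed.
Lemma gl_41 : goodg (Imp (Var 0) (Imp (Var 1) (Var 1))).
Proof. eapply goodP_cd; [exact gl_1 | exact gl_3 | | reflexivity].
  apply (cd_by _ _ (Var 0) (Imp (Var 1) (Var 0)) (upd Var 0 (Imp (Var 50) (Var 50))) _ (swaps [(1,0); (50,1)])); [reflexivity|reflexivity|reflexivity|force_tac|apply renaming_swaps|reflexivity].
Qed.
Lemma gl_42 : goodg (Imp (Imp (Imp (Var 0) (Var 0)) (Var 1)) (Var 1)).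
Proof. eapply goodP_cd; [exact gl_40 | exact gl_41 | | reflexivity].
  apply (cd_by _ _ (Imp (Imp (Var 0) (Var 1)) (Var 0)) (Imp (Imp (Var 0) (Var 1)) (Var 1)) (upd (upd Var 0 (Imp (Var 51) (Var 51))) 50 (Imp (Imp (Var 51) (Var 51)) (Var 1))) _ (swaps [(51,0)])); [reflexivity|reflexivity|reflexivity|force_tac|apply renaming_swaps|reflexivity].
Qed.
Lemma gl_43 : goodg (Imp (Var 0) (Imp (Imp (Imp (Var 1) (Var 1)) (Var 2)) (Var 2))).
Proof. eapply goodP_cd; [exact gl_1 | exact gl_42 | | reflexivity].
  apply (cd_by _ _ (Var 0) (Imp (Var 1) (Var 0)) (upd Var 0 (Imp (Imp (Imp (Var 50) (Var 50)) (Var 51)) (Var 51))) _ (swaps [(1,0); (50,1); (51,2)])); [reflexivity|reflexivity|reflexivity|force_tac|apply renaming_swaps|reflexivity].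
Qed.
Lemma gl_44 : goodg (Imp (Imp (Var 0) (Var 1)) (Imp (Imp (Imp (Var 2) (Var 2)) (Var 0)) (Var 1))).
Proof. eapply goodP_cd; [exact gl_14 | exact gl_43 | | reflexivity].
  apply (cd_by _ _ (Imp (Imp (Var 0) (Var 1)) (Imp (Var 2) (Var 0))) (Imp (Imp (Var 0) (Var 1)) (Imp (Var 2) (Var 1))) (upd (upd (upd Var 0 (Var 52)) 2 (Imp (Imp (Var 51) (Var 51)) (Var 52))) 50 (Imp (Var 52) (Var 1))) _ (swaps [(52,0); (51,2)])); [reflexivity|reflexivity|reflexivity|force_tac|apply renaming_swaps|reflexivity].
Qed.
Lemma gl_45 : goodg (Imp (Imp (Imp (Var 0) (Var 1)) (Var 0)) (Imp (Imp (Var 0) (Var 1)) (Var 0))).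
Proof. eapply goodP_cd; [exact gl_0 | exact gl_2 | | reflexivity].
  apply (cd_by _ _ (Imp (Var 0) (Imp (Var 1) (Var 2))) (Imp (Imp (Var 0) (Var 1)) (Imp (Var 0) (Var 2))) (upd (upd (upd Var 2 (Var 50)) 1 (Var 50)) 0 (Imp (Var 50) (Var 51))) _ (swaps [(50,0); (51,1)])); [reflexivity|reflexivity|reflexivity|force_tac|apply renaming_swaps|reflexivity].
Qed.
Lemma gl_46 : goodg (Imp (Imp (Imp (Var 0) (Var 0)) (Var 1)) (Imp (Var 0) (Var 0))).
Proof. eapply goodP_cd; [exact gl_45 | exact gl_41 | | reflexivity].
  apply (cd_by _ _ (Imp (Imp (Var 0) (Var 1)) (Var 0)) (Imp (Imp (Var 0) (Var 1)) (Var 0)) (upd (upd Var 0 (Imp (Var 51) (Var 51))) 50 (Imp (Imp (Var 51) (Var 51)) (Var 1))) _ (swaps [(51,0)])); [reflexivity|reflexivity|reflexivity|force_tac|apply renaming_swaps|reflexivity].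
Qed.
Lemma gl_47 : goodg (Imp (Imp (Imp (Var 0) (Var 0)) (Var 1)) (Imp (Var 2) (Imp (Var 0) (Var 0)))).
Proof. eapply goodP_cd; [exact gl_7 | exact gl_46 | | reflexivity].
  apply (cd_by _ _ (Imp (Var 0) (Var 1)) (Imp (Var 0) (Imp (Var 2) (Var 1))) (upd (upd Var 1 (Imp (Var 50) (Var 50))) 0 (Imp (Imp (Var 50) (Var 50)) (Var 51))) _ (swaps [(50,0); (51,1)])); [reflexivity|reflexivity|reflexivity|force_tac|apply renaming_swaps|reflexivity].
Qed.
Lemma gl_48 : goodg (Imp (Imp (Imp (Imp (Var 0) (Var 0)) (Var 1)) (Var 2)) (Imp (Imp (Imp (Var 0) (Var 0)) (Var 1)) (Imp (Var 0) (Var 0)))).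
Proof. eapply goodP_cd; [exact gl_0 | exact gl_47 | | reflexivity].
  apply (cd_by _ _ (Imp (Var 0) (Imp (Var 1) (Var 2))) (Imp (Imp (Var 0) (Var 1)) (Imp (Var 0) (Var 2))) (upd (upd (upd Var 2 (Imp (Var 50) (Var 50))) 1 (Var 52)) 0 (Imp (Imp (Var 50) (Var 50)) (Var 51))) _ (swaps [(50,0); (51,1); (52,2)])); [reflexivity|reflexivity|reflexivity|force_tac|apply renaming_swaps|reflexivity].
Qed.
Lemma gl_49 : goodg (Imp (Var 0) (Imp (Imp (Imp (Imp (Var 1) (Var 1)) (Var 2)) (Var 3)) (Imp (Imp (Imp (Var 1) (Var 1)) (Var 2)) (Imp (Var 1) (Var 1))))).
Proof. eapply goodP_cd; [exact gl_1 | exact gl_48 | | reflexivity].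
  apply (cd_by _ _ (Var 0) (Imp (Var 1) (Var 0)) (upd Var 0 (Imp (Imp (Imp (Imp (Var 50) (Var 50)) (Var 51)) (Var 52)) (Imp (Imp (Imp (Var 50) (Var 50)) (Var 51)) (Imp (Var 50) (Var 50))))) _ (swaps [(1,0); (50,1); (51,2); (52,3)])); [reflexivity|reflexivity|reflexivity|force_tac|apply renaming_swaps|reflexivity].
Qed.
Lemma gl_50 : goodg (Imp (Imp (Var 0) (Imp (Imp (Imp (Var 1) (Var 1)) (Var 2)) (Var 3))) (Imp (Var 0) (Imp (Imp (Imp (Var 1) (Var 1)) (Var 2)) (Imp (Var 1) (Var 1))))).
Proof. eapply goodP_cd; [exact gl_0 | exact gl_49 | | reflexivity].
  apply (cd_by _ _ (Imp (Var 0) (Imp (Var 1) (Var 2))) (Imp (Imp (Var 0) (Var 1)) (Imp (Var 0) (Var 2))) (upd (upd (upd Var 2 (Imp (Imp (Imp (Var 51) (Var 51)) (Var 52)) (Imp (Var 51) (Var 51)))) 1 (Imp (Imp (Imp (Var 51) (Var 51)) (Var 52)) (Var 53))) 0 (Var 50)) _ (swaps [(50,0); (51,1); (52,2); (53,3)])); [reflexivity|reflexivity|reflexivity|force_tac|apply renaming_swaps|reflexivity].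
Qed.
Lemma gl_51 : goodg (Imp (Imp (Var 0) (Var 1)) (Imp (Imp (Imp (Var 2) (Var 2)) (Var 0)) (Imp (Var 2) (Var 2)))).
Proof. eapply goodP_cd; [exact gl_50 | exact gl_8 | | reflexivity].
  apply (cd_by _ _ (Imp (Var 0) (Imp (Imp (Imp (Var 1) (Var 1)) (Var 2)) (Var 3))) (Imp (Var 0) (Imp (Imp (Imp (Var 1) (Var 1)) (Var 2)) (Imp (Var 1) (Var 1)))) (upd (upd (upd (upd Var 3 (Imp (Imp (Var 1) (Var 1)) (Var 51))) 2 (Var 50)) 52 (Imp (Var 1) (Var 1))) 0 (Imp (Var 50) (Var 51))) _ (swaps [(50,0); (51,1); (51,2)])); [reflexivity|reflexivity|reflexivity|force_tac|apply renaming_swaps|reflexivity].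
Qed.
Lemma gl_52 : goodg (Imp (Var 0) (Imp (Imp (Var 1) (Var 2)) (Imp (Imp (Var 3) (Var 4)) (Imp (Imp (Var 2) (Var 3)) (Imp (Var 1) (Var 4)))))).
Proof. eapply goodP_cd; [exact gl_1 | exact gl_19 | | reflexivity].
  apply (cd_by _ _ (Var 0) (Imp (Var 1) (Var 0)) (upd Var 0 (Imp (Imp (Var 50) (Var 51)) (Imp (Imp (Var 52) (Var 53)) (Imp (Imp (Var 51) (Var 52)) (Imp (Var 50) (Var 53)))))) _ (swaps [(1,0); (50,1); (51,2); (52,3); (53,4)])); [reflexivity|reflexivity|reflexivity|force_tac|apply renaming_swaps|reflexivity].
Qed.
Lemma gl_53 : goodg (Imp (Imp (Var 0) (Imp (Var 1) (Var 2))) (Imp (Var 0) (Imp (Imp (Var 3) (Var 4)) (Imp (Imp (Var 2) (Var 3)) (Imp (Var 1) (Var 4)))))).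
Proof. eapply goodP_cd; [exact gl_0 | exact gl_52 | | reflexivity].
  apply (cd_by _ _ (Imp (Var 0) (Imp (Var 1) (Var 2))) (Imp (Imp (Var 0) (Var 1)) (Imp (Var 0) (Var 2))) (upd (upd (upd Var 2 (Imp (Imp (Var 53) (Var 54)) (Imp (Imp (Var 52) (Var 53)) (Imp (Var 51) (Var 54))))) 1 (Imp (Var 51) (Var 52))) 0 (Var 50)) _ (swaps [(50,0); (51,1); (52,2); (53,3); (54,4)])); [reflexivity|reflexivity|reflexivity|force_tac|apply renaming_swaps|reflexivity].
Qed.
Lemma gl_54 : goodg (Imp (Var 0) (Imp (Imp (Var 1) (Var 2)) (Imp (Neg (Var 2)) (Neg (Var 1))))).
Proof. eapply goodP_cd; [exact gl_1 | exact gl_33 | | reflexivity].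
  apply (cd_by _ _ (Var 0) (Imp (Var 1) (Var 0)) (upd Var 0 (Imp (Imp (Var 50) (Var 51)) (Imp (Neg (Var 51)) (Neg (Var 50))))) _ (swaps [(1,0); (50,1); (51,2)])); [reflexivity|reflexivity|reflexivity|force_tac|apply renaming_swaps|reflexivity].
Qed.
Lemma gl_55 : goodg (Imp (Imp (Var 0) (Imp (Var 1) (Var 2))) (Imp (Var 0) (Imp (Neg (Var 2)) (Neg (Var 1))))).
Proof. eapply goodP_cd; [exact gl_0 | exact gl_54 | | reflexivity].
  apply (cd_by _ _ (Imp (Var 0) (Imp (Var 1) (Var 2))) (Imp (Imp (Var 0) (Var 1)) (Imp (Var 0) (Var 2))) (upd (upd (upd Var 2 (Imp (Neg (Var 52)) (Neg (Var 51)))) 1 (Imp (Var 51) (Var 52))) 0 (Var 50)) _ (swaps [(50,0); (51,1); (52,2)])); [reflexivity|reflexivity|reflexivity|force_tac|apply renaming_swaps|reflexivity].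
Qed.
Definition g_I_ok := gl_3.
Definition g_Timp_ok := gl_19.
Definition g_Tneg_ok := gl_33.
Definition g_Z_ok := gl_39.
Definition g_L_ok := gl_44.
Definition g_Q_ok := gl_37.
Definition g_Ghat_ok := gl_51.
Definition g_STimp_ok := gl_53.
Definition g_STneg_ok := gl_55.

Lemma cd_variant P Q R R' : cd P Q R -> variant R R' -> cd P Q R'.
Proof.
  intros (P'&Q'&A&B&s&H1&H2&H3&H4&H5&H6) H7. exists P', Q', A, B, s.
  do 5 (split; [assumption|]). eapply variant_trans; eauto.
Qed.

Lemma subst_fix s F : (forall x, occurs x F -> s x = Var x) -> subst s F = F.
Proof. intros H. rewrite <- (subst_var F) at 2. apply subst_ext_occ. auto. Qed.

Lemma rename_fix p F : (forall x, occurs x F -> p x = x) -> rename p F = F.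
Proof. intros H. unfold rename. apply subst_fix. intros x Hx. rewrite H; auto. Qed.

Definition bound K F := forall x, occurs x F -> x < K.

Lemma bswap_occ K g G : bound g G -> forall x, occurs x (rename (bswap (K+g) g) G) -> K + g <= x.
Proof.
  intros Hb x Hx. apply occurs_rename in Hx. destruct Hx as [y [Hy ->]].
  specialize (Hb y Hy). unfold bswap. destruct (Nat.ltb_spec y g); lia.
Qed.

Lemma bound_imp K a b : bound K (Imp a b) <-> bound K a /\ bound K b.
Proof. unfold bound; simpl; split; [intros H; split; intros; apply H; auto | intros [H1 H2] x [Hx|Hx]; auto]. Qed.
Lemma bound_mono K K' F : bound K F -> K <= K' -> bound K' F.
Proof. unfold bound; intros H1 H2 x Hx; specialize (H1 x Hx); lia. Qed.

Ltac upd_simpl := repeat (first [rewrite upd_eq | rewrite upd_neq by lia]).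

Fixpoint Env (k : nat) : form :=
  match k with 0 => Imp (Var 0) (Var 0) | S j => Imp (Imp (Var (S j)) (Var (S j))) (Env j) end.

Lemma occurs_Env k x : occurs x (Env k) <-> x <= k.
Proof. induction k; simpl; [lia|]. rewrite IHk. lia. Qed.

Lemma Env_free k : nnfree (Env k) = true.
Proof. induction k; simpl; auto. Qed.


Lemma gK G n : goodg G -> bound n G -> goodg (Imp (Var n) G).
Proof.
  intros HG Hb. set (m := n + 2).
  assert (HO : nnfree G = true) by (destruct HG as [l [_ O]]; apply (O G); apply in_or_app; simpl; auto).
  eapply goodP_cd; [exact gl_1 | exact HG | | simpl; rewrite HO; reflexivity].
  eapply cd_variant.
  - apply (cd_M1 _ _ (bswap (n+2) 2) (Var m) (Imp (Var (S m)) (Var m)) (upd Var m G)).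
    + apply renaming_bswap; lia.
    + reflexivity.
    + intros x H1 H2. simpl in H1. specialize (Hb x H2). unfold m in H1. lia.
    + simpl. apply upd_eq.
    + intros x H1 H2. simpl in H2. rewrite upd_neq; auto.
  - simpl. rewrite upd_eq. rewrite upd_neq by lia. exists (swap (S m) n). split; [apply renaming_swap|].
    unfold rename. simpl. f_equal.
    + unfold swap. simpl. rewrite ?Nat.eqb_refl. reflexivity.
    + symmetry. apply subst_fix. intros x Hx. specialize (Hb x Hx). unfold swap.
      destruct (Nat.eqb_spec x (S m)); [unfold m in *; lia|]. destruct (Nat.eqb_spec x n); [lia|]. reflexivity.
Qed.

Section Lit.
Variable A0 : form.
Definition nnOK F := forall t, subform (Neg (Neg t)) F -> subform (Neg (Neg t)) A0.
Definition good := goodP nnOK.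

Lemma nnOK_free F : nnfree F = true -> nnOK F.
Proof. intros H t Ht. exfalso; eapply nnfree_sub; eauto. Qed.
Lemma goodg_good F : goodg F -> good F.
Proof. intros [l [D O]]. exists l. split; auto. intros G HG. apply nnOK_free; auto. Qed.
Lemma nnOK_imp a b : nnOK a -> nnOK b -> nnOK (Imp a b).
Proof. intros H1 H2 t Ht. inversion Ht; subst; auto. Qed.
Lemma nnOK_var x : nnOK (Var x).
Proof. intros t Ht. inversion Ht. Qed.
Lemma nnOK_imp_inv a b : nnOK (Imp a b) -> nnOK a /\ nnOK b.
Proof. intros H; split; intros t Ht; apply H; [apply sub_impl|apply sub_impr]; auto. Qed.
Lemma nnOK_neg_inv a : nnOK (Neg a) -> nnOK a.
Proof. intros H t Ht; apply H; apply sub_neg; auto. Qed.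
Lemma nnOK_Env k : nnOK (Env k).
Proof. apply nnOK_free, Env_free. Qed.

Ltac nnok := repeat (first [apply nnOK_imp | apply nnOK_var | apply nnOK_Env | assumption]).

Lemma lit_M1 G g K Q A' B' s R :
  goodg G -> bound g G -> good Q -> bound K Q ->
  rename (bswap (K+g) g) G = Imp A' B' ->
  subst s A' = Q ->
  (forall x, occurs x B' -> ~ occurs x A' -> s x = Var x) ->
  variant (subst s B') R -> nnOK R -> good R.
Proof.
  intros HG Hb HQ HbQ HR HA HB HV HO.
  eapply goodP_cd; [apply goodg_good; exact HG| exact HQ | | exact HO].
  eapply cd_variant; [|exact HV]. eapply cd_M1; eauto.
  - apply renaming_bswap; lia.
  - intros x H1 H2. rewrite <- HR in H1. apply bswap_occ in H1; auto. specialize (HbQ x H2). lia.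
Qed.

Lemma lit_G P Q K K' A' B' s :
  good P -> good Q -> P = Imp A' B' -> bound K' P -> bound K Q ->
  subst s A' = Q ->
  (forall x, occurs x Q -> occurs x A') ->
  (forall x, occurs x Q -> s x = Var x) ->
  (forall x, ~ occurs x A' -> s x = Var x) ->
  nnOK (subst s B') -> good (subst s B').
Proof.
  intros HP HQ HPe HbP HbQ HA H1 H2 H3 HO.
  eapply goodP_cd; [exact HP|exact HQ| |exact HO].
  eapply cd_G with (q := bswap (K'+K) K); eauto.
  - apply renaming_bswap; lia.
  - intros x Hx Hy. rewrite <- HPe in Hx. specialize (HbP x Hx).
    apply occurs_rename in Hy. destruct Hy as [y [Hy ->]]. specialize (HbQ y Hy).
    unfold bswap in HbP. destruct (Nat.ltb_spec y K); lia.
Qed.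

Lemma good_mp K a b : good (Imp a b) -> good a -> bound K (Imp a b) -> good b.
Proof.
  intros H1 H2 Hb. assert (Hb' := proj1 (bound_imp _ _ _) Hb).
  replace b with (subst Var b) by apply subst_var.
  apply (lit_G (Imp a b) a K K a b Var); auto.
  - apply (proj1 Hb').
  - apply subst_var.
  - rewrite subst_var. destruct H1 as [l [_ O]]. apply nnOK_imp_inv with a. apply O. apply in_or_app; simpl; auto.
Qed.

Lemma good_nnOK F : good F -> nnOK F.
Proof. intros [l [_ O]]. apply O. apply in_or_app; simpl; auto. Qed.

Lemma S1 K E Y Z : good (Imp E (Imp Y Z)) -> bound K (Imp E (Imp Y Z)) ->
  good (Imp (Imp E Y) (Imp E Z)).
Proof.
  intros H Hb. assert (HO := good_nnOK _ H).
  apply nnOK_imp_inv in HO. destruct HO as [HE HO]. apply nnOK_imp_inv in HO. destruct HO as [HY HZ].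
  eapply (lit_M1 _ 3 K _ (Imp (Var (K+3)) (Imp (Var (S (K+3))) (Var (S (S (K+3))))))
           (Imp (Imp (Var (K+3)) (Var (S (K+3)))) (Imp (Var (K+3)) (Var (S (S (K+3))))))
           (upd (upd (upd Var (K+3) E) (S (K+3)) Y) (S (S (K+3))) Z)).
  - exact gl_0.
  - intros x Hx; simpl in Hx; lia.
  - exact H.
  - exact Hb.
  - reflexivity.
  - simpl. upd_simpl. reflexivity.
  - intros x H1 H2. exfalso. simpl in *. tauto.
  - simpl. upd_simpl. apply variant_refl.
  - nnok.
Qed.

Lemma subst_fix_upd2 K h1 h2 F G1 G2 F0 : bound K F0 -> K <= h1 -> K <= h2 ->
  subst (upd (upd F h1 G1) h2 G2) F0 = subst F F0.
Proof.
  intros Hb H1 H2. apply subst_ext_occ. intros x Hx. specialize (Hb x Hx).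
  rewrite !upd_neq by lia. reflexivity.
Qed.

Lemma imp_step K E a b :
  bound K E -> bound K a -> bound K b -> (forall x, x < K -> occurs x E) ->
  nnOK E -> nnOK a -> nnOK b ->
  good (Imp E (Imp a a)) -> good (Imp E (Imp b b)) ->
  good (Imp E (Imp (Imp a b) (Imp a b))).
Proof.
  intros HbE Hba Hbb HE OE Oa Ob Ga Gb.
  set (m := K + 5).
  set (h1 := S (S (S m))). set (h2 := S h1).
  assert (G2 : good (Imp E (Imp (Imp (Var h1) (Var h2)) (Imp (Imp a (Var h1)) (Imp a (Var h2)))))).
  { eapply (lit_M1 _ 5 K _ (Imp (Var m) (Imp (Var (S m)) (Var (S (S m)))))
      (Imp (Var m) (Imp (Imp (Var h1) (Var h2)) (Imp (Imp (Var (S (S m))) (Var h1)) (Imp (Var (S m)) (Var h2)))))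
      (upd (upd (upd Var m E) (S m) a) (S (S m)) a)).
    - exact g_STimp_ok.
    - intros x Hx; simpl in Hx; lia.
    - exact Ga.
    - apply bound_imp; split; auto. apply bound_imp; auto.
    - reflexivity.
    - simpl. unfold h2, h1, m. upd_simpl. reflexivity.
    - intros x H1 H2. simpl in H1, H2. unfold h2, h1, m in *. rewrite !upd_neq by lia. reflexivity.
    - simpl. unfold h2, h1, m. upd_simpl. apply variant_refl.
    - nnok. }
  assert (Hb3 : bound (K+10) (Imp E (Imp (Imp (Var h1) (Var h2)) (Imp (Imp a (Var h1)) (Imp a (Var h2)))))).
  { unfold h2, h1, m. intros x Hx. simpl in Hx.
    destruct Hx as [Hx|[[Hx|Hx]|[[Hx|Hx]|[Hx|Hx]]]];
    try (apply HbE in Hx; lia); try (apply Hba in Hx; lia); lia. }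
  assert (G3 := S1 (K+10) _ _ _ G2 Hb3).
  assert (E4 : Imp E (Imp (Imp a b) (Imp a b)) =
     subst (upd (upd Var h1 b) h2 b) (Imp E (Imp (Imp a (Var h1)) (Imp a (Var h2))))).
  { simpl. rewrite !(subst_fix_upd2 K) by (auto; unfold h2, h1, m; lia). rewrite !subst_var.
    unfold h2. rewrite upd_eq, upd_neq by lia. rewrite upd_eq. reflexivity. }
  rewrite E4. eapply (lit_G _ _ K (K+10)); [exact G3 | exact Gb | reflexivity | | | | | | | ].
  - intros x Hx. simpl in Hx. unfold h2, h1, m in *.
    destruct Hx as [[Hx|[Hx|Hx]]|[Hx|[[Hx|Hx]|[Hx|Hx]]]];
    try (apply HbE in Hx; lia); try (apply Hba in Hx; lia); lia.
  - apply bound_imp; split; auto. apply bound_imp; auto.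
  - simpl. rewrite (subst_fix_upd2 K) by (auto; unfold h2, h1, m; lia). rewrite subst_var.
    unfold h2. rewrite upd_eq, upd_neq by lia. rewrite upd_eq. reflexivity.
  - intros x Hx. simpl in Hx. simpl. destruct Hx as [Hx|[Hx|Hx]]; auto.
  - intros x Hx. simpl in Hx. assert (x < K) by (destruct Hx as [Hx|[Hx|Hx]]; auto).
    unfold h2, h1, m in *. rewrite !upd_neq by lia. reflexivity.
  - intros x Hx. simpl in Hx. rewrite !upd_neq; auto; intro; subst; apply Hx; auto.
  - rewrite <- E4. nnok.
Qed.

Lemma neg_step K E a :
  bound K E -> bound K a -> nnOK E -> nnOK (Neg a) ->
  good (Imp E (Imp a a)) -> good (Imp E (Imp (Neg a) (Neg a))).
Proof.
  intros HbE Hba OE Ona Ga.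
  set (m := K + 3).
  eapply (lit_M1 _ 3 K _ (Imp (Var m) (Imp (Var (S m)) (Var (S (S m)))))
      (Imp (Var m) (Imp (Neg (Var (S (S m)))) (Neg (Var (S m)))))
      (upd (upd (upd Var m E) (S m) a) (S (S m)) a)).
  - exact g_STneg_ok.
  - intros x Hx; simpl in Hx; lia.
  - exact Ga.
  - apply bound_imp; split; auto. apply bound_imp; auto.
  - reflexivity.
  - simpl. unfold m. upd_simpl. reflexivity.
  - intros x H1 H2. exfalso. simpl in *. tauto.
  - simpl. unfold m. upd_simpl. apply variant_refl.
  - nnok.
Qed.

Lemma bound_Env k : bound (S k) (Env k).
Proof. intros x Hx. apply occurs_Env in Hx. lia. Qed.

Lemma struct k : (forall j, j <= k -> good (Imp (Env k) (Imp (Var j) (Var j)))) ->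
  forall c, bound (S k) c -> nnOK c -> good (Imp (Env k) (Imp c c)).
Proof.
  intros HP c. induction c; intros Hb Hc.
  - apply HP. specialize (Hb n). simpl in Hb. lia.
  - apply bound_imp in Hb. destruct Hb as [Hb1 Hb2]. apply nnOK_imp_inv in Hc. destruct Hc.
    apply (imp_step (S k)); auto using bound_Env, nnOK_Env.
    intros x Hx. apply occurs_Env. lia.
  - apply (neg_step (S k)); auto using bound_Env, nnOK_Env.
    apply IHc; auto. apply nnOK_neg_inv; auto.
Qed.

Lemma variant_swapE k F : bound (S k) F -> forall u, S k < u ->
  variant (Imp (Imp (Var u) (Var u)) F) (Imp (Imp (Var (S k)) (Var (S k))) F).
Proof.
  intros Hb u Hu. exists (swap u (S k)). split; [apply renaming_swap|].
  unfold rename. simpl. unfold swap at 1 2. rewrite Nat.eqb_refl. f_equal.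
  symmetry. apply subst_fix. intros x Hx. specialize (Hb x Hx). unfold swap.
  destruct (Nat.eqb_spec x u); [lia|]. destruct (Nat.eqb_spec x (S k)); [lia|]. reflexivity.
Qed.

Lemma variant_swapE2 k F G : bound (S k) F -> bound (S k) G -> forall u, S k < u ->
  variant (Imp (Imp (Imp (Var u) (Var u)) F) G) (Imp (Imp (Imp (Var (S k)) (Var (S k))) F) G).
Proof.
  intros Hb HbG u Hu. exists (swap u (S k)). split; [apply renaming_swap|].
  unfold rename. simpl. unfold swap at 1 2. rewrite Nat.eqb_refl. f_equal; [f_equal|];
  symmetry; apply subst_fix; intros x Hx; [specialize (Hb x Hx)|specialize (HbG x Hx)]; unfold swap;
  (destruct (Nat.eqb_spec x u); [lia|]); (destruct (Nat.eqb_spec x (S k)); [lia|]); reflexivity.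
Qed.

Lemma variant_swapE3 k F : bound (S k) F -> forall u, S k < u ->
  variant (Imp (Imp (Imp (Var u) (Var u)) F) (Imp (Var u) (Var u)))
          (Imp (Imp (Imp (Var (S k)) (Var (S k))) F) (Imp (Var (S k)) (Var (S k)))).
Proof.
  intros Hb u Hu. exists (swap u (S k)). split; [apply renaming_swap|].
  unfold rename. simpl. unfold swap at 1 2 4 5. rewrite Nat.eqb_refl. f_equal. f_equal.
  symmetry; apply subst_fix; intros x Hx; specialize (Hb x Hx); unfold swap;
  (destruct (Nat.eqb_spec x u); [lia|]); (destruct (Nat.eqb_spec x (S k)); [lia|]); reflexivity.
Qed.

Definition Proj k := good (Env k) /\ forall j, j <= k -> good (Imp (Env k) (Imp (Var j) (Var j))).

Lemma Proj_all k : Proj k.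
Proof.
  induction k.
  - split. apply goodg_good. exact g_I_ok.
    intros j Hj. replace j with 0 by lia. apply goodg_good. exact g_Q_ok.
  - destruct IHk as [HE HP]. set (K := S k).
    assert (HEE : good (Imp (Env k) (Env k))).
    { eapply (good_mp (S k)). apply (struct k HP (Env k)); auto using bound_Env, nnOK_Env. exact HE.
      apply bound_imp; split; auto using bound_Env. apply bound_imp; split; auto using bound_Env. }
    split; [|intros j Hj; destruct (Nat.eq_dec j (S k)) as [->|Hne]].
    + set (m := K + 2).
      eapply (lit_M1 _ 2 K _ (Var m) (Imp (Imp (Var (S m)) (Var (S m))) (Var m)) (upd Var m (Env k))).
      * exact g_Z_ok.
      * intros x Hx; simpl in Hx; lia.
      * exact HE.
      * apply bound_Env.
      * reflexivity.
      * simpl. apply upd_eq.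
      * intros x H1 H2. simpl in H2. rewrite upd_neq; auto.
      * simpl. rewrite upd_eq, upd_neq by lia. apply variant_swapE. apply bound_Env. unfold m, K; lia.
      * simpl. nnok.
    + set (m := K + 3).
      eapply (lit_M1 _ 3 K _ (Imp (Var m) (Var (S m)))
         (Imp (Imp (Imp (Var (S (S m))) (Var (S (S m)))) (Var m)) (Imp (Var (S (S m))) (Var (S (S m)))))
         (upd (upd Var m (Env k)) (S m) (Env k))).
      * exact g_Ghat_ok.
      * intros x Hx; simpl in Hx; lia.
      * exact HEE.
      * apply bound_imp; split; apply bound_Env.
      * reflexivity.
      * simpl. upd_simpl. reflexivity.
      * intros x H1 H2. simpl in H2. rewrite !upd_neq; auto.
      * simpl. upd_simpl. apply variant_swapE3. apply bound_Env. unfold m, K; lia.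
      * simpl. nnok.
    + assert (Hjk : j <= k) by lia. set (m := K + 3).
      eapply (lit_M1 _ 3 K _ (Imp (Var m) (Var (S m)))
         (Imp (Imp (Imp (Var (S (S m))) (Var (S (S m)))) (Var m)) (Var (S m)))
         (upd (upd Var m (Env k)) (S m) (Imp (Var j) (Var j)))).
      * exact g_L_ok.
      * intros x Hx; simpl in Hx; lia.
      * exact (HP j Hjk).
      * apply bound_imp; split. apply bound_Env. intros x Hx; simpl in Hx; unfold K; lia.
      * reflexivity.
      * simpl. upd_simpl. reflexivity.
      * intros x H1 H2. simpl in H2. rewrite !upd_neq; auto.
      * simpl. upd_simpl. apply variant_swapE2. apply bound_Env. intros x Hx; simpl in Hx; unfold K, m in *; lia.
        unfold m, K; lia.
      * simpl. nnok.
Qed.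

Lemma mpE K E a b : good (Imp E (Imp a b)) -> good (Imp E a) -> bound K (Imp E (Imp a b)) ->
  good (Imp E b).
Proof.
  intros H1 H2 Hb. assert (G := S1 K _ _ _ H1 Hb). eapply (good_mp K); eauto.
  apply bound_imp in Hb. destruct Hb as [HbE Hb]. apply bound_imp in Hb. destruct Hb.
  apply bound_imp; split; apply bound_imp; auto.
Qed.

Lemma instE K E X G g tau : good (Imp E (Imp X X)) -> bound K (Imp E (Imp X X)) ->
  goodg G -> bound g G -> X = subst tau G -> good (Imp E X).
Proof.
  intros H Hb HG HbG HX. assert (G1 := S1 K _ _ _ H Hb).
  assert (G2 := gK G g HG HbG).
  set (Kg := K + S g).
  eapply goodP_cd; [exact G1 | apply goodg_good; exact G2 | | ].
  - eapply (cd_M2 _ _ (bswap Kg (S g)) (Imp E X) (Imp E X)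
       (fun x => if Nat.eqb x (g + Kg) then E else tau (x - Kg))); auto.
    + apply renaming_bswap; unfold Kg; lia.
    + intros x H1 H2. unfold Kg in H2. apply bswap_occ in H2.
      * specialize (Hb x). simpl in H1, Hb. assert (x < K) by tauto. lia.
      * intros y Hy. simpl in Hy. destruct Hy as [->|Hy]; [lia|]. specialize (HbG y Hy); lia.
    + unfold rename. rewrite subst_subst. simpl. f_equal.
      * unfold bswap. destruct (Nat.ltb_spec g (S g)); [|lia]. rewrite Nat.eqb_refl. reflexivity.
      * rewrite HX. apply subst_ext_occ. intros y Hy. specialize (HbG y Hy). unfold bswap.
        destruct (Nat.ltb_spec y (S g)); [|lia]. destruct (Nat.eqb_spec (y + Kg) (g + Kg)); [lia|].
        f_equal. lia.
  - apply good_nnOK in H. apply nnOK_imp_inv in H. destruct H as [H1 H2]. apply nnOK_imp_inv in H2.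
    apply nnOK_imp; tauto.
Qed.
End Lit.

Lemma goodg_H3 : goodg H3.
Proof. apply goodP_ax; [exists H3; split; [simpl; tauto | apply variant_refl] | reflexivity]. Qed.
Lemma goodg_H4 : goodg H4.
Proof. apply goodP_ax; [exists H4; split; [simpl; tauto | apply variant_refl] | reflexivity]. Qed.

Section Hilbert.
Variable A0 : form.
Variable m : nat.
Definition Sf φ := bound m φ /\ nnOK A0 φ.

Lemma Sf_imp a b : Sf (Imp a b) <-> Sf a /\ Sf b.
Proof. unfold Sf. rewrite bound_imp. split.
  - intros [[H1 H2] H3]. apply nnOK_imp_inv in H3. tauto.
  - intros [[H1 H2] [H3 H4]]. split; auto. apply nnOK_imp; auto. Qed.

Inductive Der (G : form -> Prop) : form -> Prop :=
| Dhyp : forall p, G p -> Sf p -> Der G p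
| Dax : forall p H g tau, goodg H -> bound g H -> p = subst tau H -> Sf p -> Der G p
| Dmp : forall a b, Der G (Imp a b) -> Der G a -> Der G b.

Lemma Der_S G p : Der G p -> Sf p.
Proof. induction 1; auto. apply Sf_imp in IHDer1. tauto. Qed.

Lemma Der_mono (G1 G2 : form -> Prop) p : (forall q, G1 q -> G2 q) -> Der G1 p -> Der G2 p.
Proof. intros H D. induction D; [apply Dhyp; auto | eapply Dax; eauto | eapply Dmp; eauto]. Qed.

Definition tau3 a b c := fun x => match x with 0 => a | 1 => b | 2 => c | _ => Var x end.

Lemma bound_H1 : bound 2 H1. Proof. intros x Hx; simpl in Hx; lia. Qed.
Lemma bound_H2 : bound 3 H2. Proof. intros x Hx; simpl in Hx; lia. Qed.
Lemma bound_H3 : bound 1 H3. Proof. intros x Hx; simpl in Hx; lia. Qed.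
Lemma bound_H4 : bound 2 H4. Proof. intros x Hx; simpl in Hx; lia. Qed.

Lemma DK G a b : Sf a -> Sf b -> Der G (Imp a (Imp b a)).
Proof. intros. eapply (Dax _ _ H1 2 (tau3 a b a)); [exact gl_1 | apply bound_H1 | reflexivity |].
  repeat (apply Sf_imp; split); auto. Qed.
Lemma DS G a b c : Sf a -> Sf b -> Sf c -> Der G (Imp (Imp a (Imp b c)) (Imp (Imp a b) (Imp a c))).
Proof. intros. eapply (Dax _ _ H2 3 (tau3 a b c)); [exact gl_0 | apply bound_H2 | reflexivity |].
  repeat (apply Sf_imp; split); auto. Qed.
Lemma DI G a : Sf a -> Der G (Imp a a).
Proof.
  intros Ha. assert (Haa : Sf (Imp a a)) by (apply Sf_imp; auto).
  assert (Haaa : Sf (Imp a (Imp a a))) by (apply Sf_imp; auto).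
  eapply Dmp; [eapply Dmp; [apply (DS _ a (Imp a a) a); auto | apply DK; auto] | apply DK; auto].
Qed.

Lemma deduction G a b : Sf a -> Der (fun q => G q \/ q = a) b -> Der G (Imp a b).
Proof.
  intros Ha D. induction D.
  - destruct H as [H| ->].
    + eapply Dmp; [apply DK; auto | apply Dhyp; auto].
    + apply DI; auto.
  - eapply Dmp; [apply DK; auto | eapply Dax; eauto].
  - assert (Sab := Der_S _ _ D1). apply Sf_imp in Sab. destruct Sab.
    eapply Dmp; [eapply Dmp; [apply DS; auto | exact IHD1] | exact IHD2]. all: auto.
Qed.

Definition theory (G : form -> Prop) := (forall p, G p -> Sf p) /\ (forall p, Der G p -> G p).
Definition Expl (G : form -> Prop) := forall p, Sf p -> G p.
Definition sub (G D : form -> Prop) := forall p, G p -> D p.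

Fixpoint frc (G : form -> Prop) (f : form) : Prop :=
  match f with
  | Var x => G (Var x) \/ Expl G
  | Imp a b => forall D, theory D -> sub G D -> frc D a -> frc D b
  | Neg a => forall D, theory D -> sub G D -> frc D a -> Expl D
  end.

Lemma frc_mono f : forall G D, frc G f -> theory D -> sub G D -> frc D f.
Proof.
  induction f; simpl; intros G D H HD Hs.
  - destruct H as [H|H]; [left; auto | right; intros p Hp; apply Hs; auto].
  - intros D' HD' Hs'. apply H; auto. intros p Hp; apply Hs', Hs; auto.
  - intros D' HD' Hs'. apply H; auto. intros p Hp; apply Hs', Hs; auto.
Qed.

Lemma frc_expl f : forall G, Expl G -> frc G f.
Proof.
  induction f; simpl; intros G HE.
  - right; auto.
  - intros D HD Hs _. apply IHf2. intros p Hp; apply Hs, HE; auto.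
  - intros D HD Hs _. intros p Hp; apply Hs, HE; auto.
Qed.

Lemma subs_refl G : sub G G. Proof. intros p; auto. Qed.
Lemma sub_trans G D E : sub G D -> sub D E -> sub G E. Proof. intros H1 H2 p Hp; auto. Qed.

Lemma frc_mp G a b : theory G -> frc G (Imp a b) -> frc G a -> frc G b.
Proof. intros HG H1 H2. apply H1; auto using subs_refl. Qed.

Lemma sem_K G a b : theory G -> frc G (Imp a (Imp b a)).
Proof. simpl. intros HG D HD Hs Ha D' HD' Hs' _. eapply frc_mono; eauto. Qed.

Lemma sem_S G a b c : theory G -> frc G (Imp (Imp a (Imp b c)) (Imp (Imp a b) (Imp a c))).
Proof.
  simpl. intros HG D1 HD1 S1 F1 D2 HD2 S2 F2 D3 HD3 S3 F3.
  assert (Fbc : frc D3 (Imp b c)) by (simpl; exact (F1 D3 HD3 (sub_trans _ _ _ S2 S3) F3)).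
  assert (Fb : frc D3 b) by (exact (F2 D3 HD3 S3 F3)).
  apply (frc_mp D3 b c); auto.
Qed.

Lemma sem_H3 G a : theory G -> frc G (Imp (Imp a (Neg a)) (Neg a)).
Proof.
  simpl. intros HG D1 HD1 S1 F1 D2 HD2 S2 F2.
  assert (H := F1 D2 HD2 S2 F2). simpl in H. apply (H D2 HD2 (subs_refl _) F2).
Qed.

Lemma sem_H4 G a b : theory G -> frc G (Imp a (Imp (Neg a) b)).
Proof.
  simpl. intros HG D1 HD1 S1 F1 D2 HD2 S2 F2. apply frc_expl.
  apply (F2 D2 HD2 (subs_refl _)). eapply frc_mono; eauto.
Qed.

Definition valid f := forall s G, theory G -> frc G (subst s f).

Lemma valid_ax f : is_axiom f -> valid f.
Proof.
  intros [H [HIn [p [_ ->]]]] s G HG. unfold rename. rewrite subst_subst.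
  simpl in HIn. destruct HIn as [<-|[<-|[<-|[<-|[]]]]]; simpl.
  - apply sem_K; auto.
  - apply sem_S; auto.
  - apply sem_H3; auto.
  - apply sem_H4; auto.
Qed.

Lemma valid_variant f g : valid f -> variant f g -> valid g.
Proof. intros H [p [_ ->]] s G HG. unfold rename. rewrite subst_subst. apply H; auto. Qed.

Lemma valid_cd P Q R : valid P -> valid Q -> cd P Q R -> valid R.
Proof.
  intros HP HQ (P'&Q'&A&B&s&V1&V2&_&E&[U _]&V3).
  assert (VP' := valid_variant _ _ HP V1). assert (VQ' := valid_variant _ _ HQ V2).
  eapply valid_variant; [|exact V3]. intros s' G HG.
  specialize (VP' (fun x => subst s' (s x)) G HG). specialize (VQ' (fun x => subst s' (s x)) G HG).
  rewrite E in VP'. simpl in VP'. rewrite subst_subst.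
  assert (EQ : subst (fun x => subst s' (s x)) A = subst (fun x => subst s' (s x)) Q').
  { rewrite <- !subst_subst. unfold unifier in U. rewrite U. reflexivity. }
  rewrite EQ in VP'. eapply frc_mp; eauto.
Qed.

Lemma valid_derivation l : derivation l -> forall f, In f l -> valid f.
Proof.
  induction 1; intros f Hf; [destruct Hf| |]; apply in_app_or in Hf; destruct Hf as [Hf|[<-|[]]]; auto.
  - apply valid_ax; auto.
  - eapply valid_cd; [apply IHderivation; exact H0 | apply IHderivation; exact H1 | exact H2].
Qed.

Lemma subform_trans f g h : subform f g -> subform g h -> subform f h.
Proof. intros H1 H2. induction H2; [auto| apply sub_impl | apply sub_impr | apply sub_neg]; auto. Qed.

Lemma subform_occurs x f g : subform f g -> occurs x f -> occurs x g.
Proof. induction 1; simpl; auto. Qed.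

Lemma Sf_sub f : subform f A0 -> bound m A0 -> Sf f.
Proof.
  intros H Hb. split.
  - intros x Hx. apply Hb. eapply subform_occurs; eauto.
  - intros t Ht. eapply subform_trans; eauto.
Qed.

Lemma Der_idem G p : Der (Der G) p -> Der G p.
Proof. induction 1; auto. eapply Dax; eauto. eapply Dmp; eauto. Qed.

Lemma theory_ext G a : theory G -> Sf a -> theory (Der (fun q => G q \/ q = a)).
Proof.
  intros HG Ha. split.
  - apply Der_S.
  - apply Der_idem.
Qed.

Lemma sub_ext G a : theory G -> sub G (Der (fun q => G q \/ q = a)).
Proof. intros HG p Hp. apply Dhyp; auto. apply (proj1 HG); auto. Qed.

Lemma truth f : bound m A0 -> subform f A0 -> forall G, theory G -> (frc G f <-> G f).
Proof.
  intros Hb. induction f; intros Hf G HG; simpl.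
  - split; [intros [H|H]; auto; apply H; apply Sf_sub; auto | auto].
  - assert (Ha : subform f1 A0) by (apply (subform_trans _ (Imp f1 f2)); [apply sub_impl, sub_refl|exact Hf]).
    assert (Hb2 : subform f2 A0) by (apply (subform_trans _ (Imp f1 f2)); [apply sub_impr, sub_refl|exact Hf]).
    assert (Sa := Sf_sub _ Ha Hb). split.
    + intros H. set (D := Der (fun q => G q \/ q = f1)).
      assert (HD : theory D) by (apply theory_ext; auto).
      assert (Fa : frc D f1) by (apply (IHf1 Ha D HD); apply Dhyp; auto).
      assert (Fb := H D HD (sub_ext G f1 HG) Fa).
      apply (IHf2 Hb2 D HD) in Fb. apply (proj2 HG). apply deduction; auto.
    + intros H D HD Hs Fa. apply (IHf2 Hb2 D HD). apply (IHf1 Ha D HD) in Fa.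
      apply (proj2 HD). apply (Dmp _ f1 f2); apply Dhyp; auto; apply (proj1 HD); auto.
  - assert (Ha : subform f A0) by (apply (subform_trans _ (Neg f)); [apply sub_neg, sub_refl|exact Hf]).
    assert (Sa := Sf_sub _ Ha Hb). assert (Sna := Sf_sub _ Hf Hb). split.
    + intros H. set (D := Der (fun q => G q \/ q = f)).
      assert (HD : theory D) by (apply theory_ext; auto).
      assert (Fa : frc D f) by (apply (IHf Ha D HD); apply Dhyp; auto).
      assert (HE := H D HD (sub_ext G f HG) Fa).
      assert (Dn := HE (Neg f) Sna).
      apply (proj2 HG). eapply Dmp; [|apply deduction; [exact Sa| exact Dn]].
      eapply (Dax _ _ H3 1 (tau3 f f f)); [exact goodg_H3 | apply bound_H3 | reflexivity |].
      repeat (apply Sf_imp; split); auto.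
    + intros H D HD Hs Fa. apply (IHf Ha D HD) in Fa. intros p Hp.
      apply (proj2 HD). eapply Dmp; [eapply Dmp; [|apply Dhyp; [exact Fa|exact Sa]]|apply Dhyp; [apply Hs; exact H|exact Sna]].
      eapply (Dax _ _ H4 2 (tau3 f p p)); [exact goodg_H4 | apply bound_H4 | reflexivity |].
      repeat (apply Sf_imp; split); auto.
Qed.

End Hilbert.

Fixpoint maxvar (f : form) : nat :=
  match f with Var x => x | Imp a b => Nat.max (maxvar a) (maxvar b) | Neg a => maxvar a end.
Lemma maxvar_bound f : bound (S (maxvar f)) f.
Proof. induction f; intros x Hx; simpl in *; [lia| destruct Hx as [Hx|Hx]; [apply IHf1 in Hx|apply IHf2 in Hx]; lia | apply IHf in Hx; lia]. Qed.

Theorem theorem9 (A : form) :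
  provable A ->
  exists l : list form,
    derivation (l ++ [A]) /\
    (forall F, In F (l ++ [A]) ->
       forall t, subform (Neg (Neg t)) F -> subform (Neg (Neg t)) A).
Proof.
  intros [l D]. set (k := maxvar A).
  assert (Hb : bound (S k) A) by apply maxvar_bound.
  assert (V := valid_derivation A (S k) _ D A (in_or_app l [A] A (or_intror (or_introl eq_refl)))).
  set (G0 := Der A (S k) (fun _ => False)).
  assert (HG0 : theory A (S k) G0) by (split; [apply Der_S | apply Der_idem]).
  assert (FA := V Var G0 HG0). rewrite subst_var in FA.
  apply (truth A (S k) A Hb (sub_refl _) G0 HG0) in FA.
  destruct (Proj_all A k) as [HE HP].
  assert (Conv : forall p, Der A (S k) (fun _ => False) p -> good A (Imp (Env k) p)).
  { intros p Dp. induction Dp as [p []|p H g tau HH Hg Hp HS|a b D1 IH1 D2 IH2].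
    - destruct HS as [HbS HOS]. eapply (instE A (S k) (Env k) p H g tau); eauto.
      + apply struct; auto.
      + apply bound_imp; split; [apply bound_Env|]. apply bound_imp; auto.
    - apply (mpE A (S k) (Env k) a b IH1 IH2).
      apply Der_S in D1. destruct D1 as [HbS _]. apply bound_imp; split; [apply bound_Env|auto]. }
  assert (GA := good_mp A (S k) (Env k) A (Conv A FA) HE).
  assert (GA' : good A A).
  { apply GA. apply bound_imp; split; [apply bound_Env | auto]. }
  exact GA'.
Qed.
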